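(* Let $\mathcal{K}$ be a finite set of arms, $C_0\ge 10$, $t_0=2C_0|\mathcal{K}|$ and $T>\frac{(t_0+1)^2}{e^2}$. Under the $\epsilon$-decay random sampling method, for each arm $k\in\mathcal{K}$ the number $n_k$ of random samples of arm $k$ drawn up to time $T$ satisfies $$C_0(1+\log(T+1)-\log(t_0+1))\le n_k \le3C_0(1+\log(T)-\log(t_0))$$ with probability at least $1-\frac{2}{T+1}$.
   Context: $\epsilon$-decay random sampling method: at each time $t=1,2,\dots$, independently of everything else, the decision-maker draws a random sample with probability $\min\{1,t_0/t\}$; when a random sample is drawn, an arm is selected uniformly at random from $\mathcal{K}$ (each with probability $1/|\mathcal{K}|$). $n_k$ is the number of times $t\le T$ at which a random sample was drawn and arm $k$ was selected. *)

(* Defs.v *)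
From HB Require Import structures.
From mathcomp Require Import all_boot all_order all_algebra.
From mathcomp Require Import all_classical all_reals all_analysis.
Set Implicit Arguments. Unset Strict Implicit. Unset Printing Implicit Defensive.
Import Order.TTheory GRing.Theory Num.Theory.
Local Open Scope ring_scope.

(* An outcome is a finite function w : 'I_T -> option K, where w i (for time
   t = i+1) is [None] if no random sample was drawn at time t, and [Some k]
   if a random sample was drawn and arm k was selected. *)

Definition eps_prob (R : realType) (t0 : R) (t : nat) : R :=
  Num.min 1 (t0 / t%:R).

Definition step_law (R : realType) (K : finType) (t0 : R) (t : nat)
  (o : option K) : R :=
  match o with
  | None => 1 - eps_prob t0 t
  | Some _ => eps_prob t0 t / #|K|%:R
  end.

Definition path_prob (R : realType) (K : finType) (t0 : R) (T : nat)
  (w : {ffun 'I_T -> option K}) : R :=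
  \prod_(i < T) step_law t0 i.+1 (w i).

Definition eps_decay_Pr (R : realType) (K : finType) (t0 : R) (T : nat)
  (E : pred {ffun 'I_T -> option K}) : R :=
  \sum_(w | E w) path_prob t0 w.

Definition n_arm (K : finType) (T : nat) (k : K)
  (w : {ffun 'I_T -> option K}) : nat :=
  #|[set i : 'I_T | w i == Some k]|.

(* Main.v *)
Require Import Defs.
From HB Require Import structures.
From mathcomp Require Import all_boot all_order all_algebra.
From mathcomp Require Import all_classical all_reals all_analysis.
From mathcomp Require Import lra ring.
Import Order.TTheory GRing.Theory Num.Theory.
Local Open Scope ring_scope.

Lemma sum_option (R : realType) (K : finType) (k0 : K) (F : option K -> R) :
  \sum_(o : option K) F o = F None + \sum_(j : K) F (Some j).
Proof.
rewrite (bigD1 None) //=; congr (_ + _).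
rewrite (reindex_onto Some (fun o => odflt k0 o)) /=; last by case.
by apply: eq_bigl => j /=; rewrite eqxx.
Qed.

Lemma eps_prob_ge0 (R : realType) (t0 : R) t : 0 <= t0 -> 0 <= eps_prob t0 t.
Proof.
move=> h; rewrite /eps_prob le_min ler01 /=; exact: divr_ge0.
Qed.

Lemma eps_prob_le1 (R : realType) (t0 : R) t : eps_prob t0 t <= 1.
Proof. by rewrite /eps_prob ge_min lexx. Qed.

Lemma mgf (R : realType) (K : finType) (t0 : R) (T : nat) (k : K) (z : R) :
  \sum_(w : {ffun 'I_T -> option K}) path_prob t0 w * z ^+ n_arm k w =
  \prod_(i < T) (1 + eps_prob t0 i.+1 / #|K|%:R * (z - 1)).
Proof.
have hw : forall w : {ffun 'I_T -> option K}, path_prob t0 w * z ^+ n_arm k w =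
   \prod_(i < T) (step_law t0 i.+1 (w i) * (if w i == Some k then z else 1)).
  move=> w; rewrite big_split /= /path_prob; congr (_ * _).
  rewrite /n_arm -prodr_const big_mkcond /=; apply: eq_bigr => i _; by rewrite inE.
under eq_bigr do rewrite hw.
rewrite -(bigA_distr_bigA (fun (i : 'I_T) (o : option K) => step_law t0 i.+1 o * (if o == Some k then z else 1))) /=.
apply: eq_bigr => i _.
rewrite (sum_option _ _ k) /=.
have nK : #|K|%:R != 0 :> R.
  by rewrite pnatr_eq0 -lt0n; apply/card_gt0P; exists k.
set p := eps_prob t0 i.+1.
transitivity (1 - p + \sum_(j : K) (p / #|K|%:R + (if j == k then p / #|K|%:R * (z - 1) else 0))).
  rewrite mulr1; congr (_ + _); apply: eq_bigr => j _.
  rewrite (inj_eq (@Some_inj _)); case: (j == k); ring.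
rewrite big_split /= sumr_const -big_mkcond /= big_pred1_eq.
rewrite (_ : #|xpredT| = #|K|) // -[p / _ *+ _]mulr_natr divfK //; ring.
Qed.

Lemma step_law_ge0 (R : realType) (K : finType) (t0 : R) t o :
  0 <= t0 -> 0 <= step_law (K:=K) t0 t o.
Proof.
move=> h; case: o => [j|] /=.
  by apply: divr_ge0; [exact: eps_prob_ge0|exact: ler0n].
by rewrite subr_ge0 eps_prob_le1.
Qed.

Lemma path_prob_ge0 (R : realType) (K : finType) (t0 : R) (T : nat)
  (w : {ffun 'I_T -> option K}) : 0 <= t0 -> 0 <= path_prob t0 w.
Proof. by move=> h; apply: prodr_ge0 => i _; exact: step_law_ge0. Qed.

Lemma total_prob (R : realType) (K : finType) (t0 : R) (T : nat) (k : K) :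
  \sum_(w : {ffun 'I_T -> option K}) path_prob t0 w = 1.
Proof.
have := @mgf R K t0 T k 1; rewrite subrr.
under eq_bigr do rewrite expr1n mulr1.
move=> ->; apply: big1 => i _; by rewrite mulr0 addr0.
Qed.

Lemma tail_up (R : realType) (K : finType) (t0 : R) (T : nat) (k : K) (lam a : R) :
  0 <= lam -> 0 <= t0 ->
  eps_decay_Pr t0 (fun w : {ffun 'I_T -> option K} => a <= (n_arm k w)%:R)
  <= expR (- lam * a) *
     \prod_(i < T) (1 + eps_prob t0 i.+1 / #|K|%:R * (expR lam - 1)).
Proof.
move=> hl ht; rewrite -(@mgf R K t0 T k) mulr_sumr /eps_decay_Pr.
rewrite [X in _ <= X](bigID (fun w : {ffun 'I_T -> option K} => a <= (n_arm k w)%:R)) /=.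
rewrite -[X in X <= _]addr0; apply: lerD; last first.
  apply: sumr_ge0 => w _; apply: mulr_ge0; first exact: expR_ge0.
  by apply: mulr_ge0; [exact: path_prob_ge0|apply: exprn_ge0; exact: expR_ge0].
apply: ler_sum => w hw.
rewrite mulrCA -[X in X <= _]mulr1; apply: ler_wpM2l; first exact: path_prob_ge0.
rewrite -expRM_natl -expRD.
apply: le_trans (expR_ge1Dx _); rewrite lerDl.
move: hw => /= hw; nra.
Qed.

Lemma tail_low (R : realType) (K : finType) (t0 : R) (T : nat) (k : K) (lam b : R) :
  0 <= lam -> 0 <= t0 ->
  eps_decay_Pr t0 (fun w : {ffun 'I_T -> option K} => (n_arm k w)%:R <= b)
  <= expR (lam * b) *
     \prod_(i < T) (1 + eps_prob t0 i.+1 / #|K|%:R * (expR (- lam) - 1)).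
Proof.
move=> hl ht; rewrite -(@mgf R K t0 T k) mulr_sumr /eps_decay_Pr.
rewrite [X in _ <= X](bigID (fun w : {ffun 'I_T -> option K} => (n_arm k w)%:R <= b)) /=.
rewrite -[X in X <= _]addr0; apply: lerD; last first.
  apply: sumr_ge0 => w _; apply: mulr_ge0; first exact: expR_ge0.
  by apply: mulr_ge0; [exact: path_prob_ge0|apply: exprn_ge0; exact: expR_ge0].
apply: ler_sum => w hw.
rewrite mulrCA -[X in X <= _]mulr1; apply: ler_wpM2l; first exact: path_prob_ge0.
rewrite -expRM_natl -expRD.
apply: le_trans (expR_ge1Dx _); rewrite lerDl.
move: hw => /= hw; nra.
Qed.

Lemma prod_le_exp (R : realType) (T : nat) (q : nat -> R) (z : R) :
  0 <= z -> (forall i, 0 <= q i <= 1) ->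
  \prod_(i < T) (1 + q i * (z - 1)) <= expR ((z - 1) * \sum_(i < T) q i).
Proof.
move=> hz hq; rewrite mulr_sumr expR_sum; apply: ler_prod => i _.
have /andP[h0 h1] := hq i.
apply/andP; split; last by rewrite mulrC; exact: expR_ge1Dx.
have -> : 1 + q i * (z - 1) = (1 - q i) + q i * z by ring.
by apply: addr_ge0; [rewrite subr_ge0|exact: mulr_ge0].
Qed.

Lemma expR_le_pow (R : realType) (x : R) (n : nat) : (0 < n)%N -> x < n%:R ->
  expR x <= (n%:R / (n%:R - x)) ^+ n.
Proof.
move=> hn hx.
have n0 : (0 : R) < n%:R by rewrite ltr0n.
set y := x / n%:R.
have hxy : x = n%:R * y by rewrite /y mulrC divfK // gt_eqF.
have hy : y < 1 by rewrite /y ltr_pdivrMr // mul1r.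
have -> : n%:R / (n%:R - x) = (1 - y)^-1.
  rewrite hxy; field; rewrite !gt_eqF // ?subr_gt0 //; nra.
rewrite hxy expRM_natl; apply: lerXn2r; rewrite ?nnegrE ?expR_ge0 //.
  by rewrite invr_ge0 subr_ge0 ltW.
have h1 : 1 - y <= expR (- y) by exact: expR_ge1Dx.
have h2 : 0 < 1 - y by rewrite subr_gt0.
rewrite -[expR y]invrK -expRN lef_pV2 ?posrE ?expR_gt0 //.
Qed.

Lemma expR_ge_pow (R : realType) (x : R) (n : nat) : (0 < n)%N -> 0 <= x ->
  (1 + x / n%:R) ^+ n <= expR x.
Proof.
move=> hn hx.
have n0 : (0 : R) < n%:R by rewrite ltr0n.
set y := x / n%:R.
have hxy : x = n%:R * y by rewrite /y mulrC divfK // gt_eqF.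
rewrite hxy expRM_natl; apply: lerXn2r; rewrite ?nnegrE ?expR_ge0 //.
  by apply: addr_ge0 => //; apply: divr_ge0 => //; exact: ltW.
exact: expR_ge1Dx.
Qed.

Lemma e_le3 (R : realType) : expR (1 : R) <= 3.
Proof.
apply: le_trans (@expR_le_pow R (1) 8 _ _) _ => //.
  by rewrite ltr1n.
have -> : (8%:R : R) / (8%:R - 1) = 8 / 7 by congr (_ / _); lra.
rewrite expr_div_n; lra.
Qed.

Lemma ln2_le (R : realType) : ln (2 : R) <= 3 / 4.
Proof.
rewrite -[X in _ <= X](expRK (R:=R)) ler_ln ?posrE ?expR_gt0 //.
apply: le_trans (@expR_ge_pow R (3/4) 8 _ _) => //; last lra.
Qed.

Lemma ln32_ge (R : realType) : 64 / 159 <= ln (3 / 2 : R).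
Proof.
rewrite -[X in X <= _](expRK (R:=R)) ler_ln ?posrE ?expR_gt0 //.
apply: le_trans (@expR_le_pow R (64/159) 64 _ _) _ => //; first lra.
have -> : (64%:R : R) / (64%:R - 64 / 159) = 159 / 158 by field.
rewrite expr_div_n; lra.
Qed.

Lemma ln_sub_le (R : realType) (a b : R) : 0 < a -> 0 < b -> ln b - ln a <= (b - a) / a.
Proof.
move=> ha hb; rewrite -ln_div ?posrE //.
have -> : b / a = 1 + (b - a) / a by field; rewrite gt_eqF.
apply: le_ln1Dx.
have : 0 < b / a by exact: divr_gt0.
have -> : b / a = 1 + (b - a) / a by field; rewrite gt_eqF.
lra.
Qed.

Lemma sum_bounds (R : realType) (t0 : R) (T : nat) : 1 <= t0 -> t0 < T%:R ->
  let m := Num.Def.trunc t0 in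
  (m%:R + t0 * (ln (T%:R + 1) - ln (m.+1%:R)) <= \sum_(i < T) eps_prob t0 i.+1) /\
  (\sum_(i < T) eps_prob t0 i.+1 <= m.+1%:R + t0 * (ln T%:R - ln (m.+1%:R))).
Proof.
move=> h1 hT m.
have t00 : 0 <= t0 by lra.
have /andP[hm1 hm2] := truncn_itv t00; rewrite -/m in hm1 hm2.
have mT : (m < T)%N by rewrite -(ltr_nat R); apply: le_lt_trans hT.
rewrite -(big_mkord xpredT (fun i => eps_prob t0 i.+1)).
rewrite (big_cat_nat _ (n:=m)) //=; last exact: ltnW.
have -> : \sum_(0 <= i < m) eps_prob t0 i.+1 = m%:R.
  rewrite (eq_big_nat _ _ (F2 := fun=> 1)) ?sumr_const_nat ?subn0 //.
  move=> i /andP[_ hi]; rewrite /eps_prob min_l //.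
  rewrite ler_pdivlMr ?ltr0n // mul1r; apply: le_trans hm1; by rewrite ler_nat.
rewrite (eq_big_nat _ _ (F2 := fun i => t0 / i.+1%:R)); last first.
  move=> i /andP[hi _]; rewrite /eps_prob min_r //.
  rewrite ler_pdivrMr ?ltr0n // mul1r; apply: (ltW (lt_le_trans hm2 _)); by rewrite ler_nat.
split.
  rewrite lerD2l.
  have -> : t0 * (ln (T%:R + 1) - ln m.+1%:R) =
     \sum_(m <= i < T) ((fun j => t0 * ln (j.+1%:R)) i.+1 - (fun j => t0 * ln (j.+1%:R)) i).
    rewrite telescope_sumr; last exact: ltnW.
    by rewrite natr1 mulrBr.
  apply: ler_sum_nat => i /andP[hi _].
  rewrite -mulrBr; apply: ler_wpM2l => //.
  apply: le_trans (@ln_sub_le R i.+1%:R i.+2%:R _ _) _; rewrite ?ltr0n //.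
  have e : (i.+2%:R : R) = i.+1%:R + 1 by rewrite natr1.
  by rewrite e addrAC subrr add0r div1r.
rewrite -[m.+1%:R]natr1 -addrA lerD2l big_ltn //.
rewrite natr1; apply: lerD.
  by rewrite ler_pdivrMr ?ltr0n // mul1r ltW.
have -> : t0 * (ln T%:R - ln m.+1%:R) =
   \sum_(m.+1 <= i < T) ((fun j => t0 * ln (j%:R)) i.+1 - (fun j => t0 * ln (j%:R)) i).
  by rewrite telescope_sumr // mulrBr.
apply: ler_sum_nat => i /andP[hi _] /=.
rewrite -mulrBr; apply: ler_wpM2l => //.
have i0 : (0 < i)%N by apply: leq_trans hi.
have := @ln_sub_le R i.+1%:R i%:R (ltr0Sn _ _) ltac:(by rewrite ltr0n).
have e : (i.+1%:R : R) = i%:R + 1 by rewrite natr1.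
rewrite e (_ : i%:R - (i%:R + 1) = - 1 :> R); last by ring.
rewrite mulNr div1r; lra.
Qed.

Lemma combine_tails (R : realType) (K : finType) (t0 : R) (T : nat) (k : K) (a b r : R) :
  0 <= t0 ->
  \sum_(w : {ffun 'I_T -> option K}) path_prob t0 w = 1 ->
  eps_decay_Pr t0 (fun w : {ffun 'I_T -> option K} => (n_arm k w)%:R <= b) <= r ->
  eps_decay_Pr t0 (fun w : {ffun 'I_T -> option K} => a <= (n_arm k w)%:R) <= r ->
  1 - 2 * r <= eps_decay_Pr t0 (fun w : {ffun 'I_T -> option K} =>
     (b <= (n_arm k w)%:R) && ((n_arm k w)%:R <= a)).
Proof.
move=> t00 tot h1 h2.
rewrite (bigID (fun w : {ffun 'I_T -> option K} =>
   (b <= (n_arm k w)%:R) && ((n_arm k w)%:R <= a))) /= in tot.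
have hbad : \sum_(w : {ffun 'I_T -> option K} | ~~ ((b <= (n_arm k w)%:R) && ((n_arm k w)%:R <= a)))
     path_prob t0 w <=
   eps_decay_Pr t0 (fun w : {ffun 'I_T -> option K} => (n_arm k w)%:R <= b) +
   eps_decay_Pr t0 (fun w : {ffun 'I_T -> option K} => a <= (n_arm k w)%:R).
  rewrite /eps_decay_Pr.
  have s1 : \sum_(w : {ffun 'I_T -> option K} | ~~ ((b <= (n_arm k w)%:R) && ((n_arm k w)%:R <= a)))
     path_prob t0 w = \sum_(w : {ffun 'I_T -> option K}) (if ~~ ((b <= (n_arm k w)%:R) && ((n_arm k w)%:R <= a))
     then path_prob t0 w else 0) by apply: big_mkcond.
  have s2 : \sum_(w : {ffun 'I_T -> option K} | (n_arm k w)%:R <= b) path_prob t0 w =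
     \sum_(w : {ffun 'I_T -> option K}) (if (n_arm k w)%:R <= b then path_prob t0 w else 0) by apply: big_mkcond.
  have s3 : \sum_(w : {ffun 'I_T -> option K} | a <= (n_arm k w)%:R) path_prob t0 w =
     \sum_(w : {ffun 'I_T -> option K}) (if a <= (n_arm k w)%:R then path_prob t0 w else 0) by apply: big_mkcond.
  rewrite s1 s2 s3 -big_split /=.
  apply: ler_sum => w _.
  have P0 : 0 <= path_prob t0 w by exact: path_prob_ge0.
  set x := (n_arm k w)%:R.
  case: (boolP (x <= b)) => g1; case: (boolP (a <= x)) => g2;
    case: ifP => hg; try lra.
move: hbad; rewrite /eps_decay_Pr => hbad.
move: h1 h2; rewrite /eps_decay_Pr => h1 h2.
lra.
Qed.

Theorem proposition2 (R : realType) (K : finType) (C0 t0 : R) (T : nat) :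
  10 <= C0 ->
  t0 = 2 * C0 * #|K|%:R ->
  (t0 + 1) ^+ 2 / (expR 1) ^+ 2 < T%:R ->
  forall k : K,
    1 - 2 / (T%:R + 1) <=
    eps_decay_Pr t0
      (fun w : {ffun 'I_T -> option K} =>
         (C0 * (1 + ln (T%:R + 1) - ln (t0 + 1)) <= (n_arm k w)%:R) &&
         ((n_arm k w)%:R <= 3 * C0 * (1 + ln T%:R - ln t0))).
Proof.
move=> hC ht0 hT k.
set n : R := #|K|%:R.
have hn : 1 <= n.
  rewrite /n (_ : (1 : R) = 1%:R) // ler_nat; apply/card_gt0P; by exists k.
have t020 : 20 <= t0 by rewrite ht0; nra.
have t00 : 0 <= t0 by lra.
set E := expR (1 : R).
have hE3 : E <= 3 by exact: e_le3.
have hE0 : 0 < E by exact: expR_gt0.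
have hTe : (t0 + 1) ^+ 2 < T%:R * E ^+ 2.
  by rewrite -ltr_pdivrMr // exprn_gt0.
have hT1 : t0 + 1 < T%:R.
  have h9 : E ^+ 2 <= 9 by rewrite expr2; nra.
  have hT0 : 0 <= T%:R :> R by exact: ler0n.
  rewrite expr2 in hTe; rewrite expr2 in h9; nra.
have T0 : 0 < T%:R :> R by lra.
set A := ln (t0 + 1); set B := ln (T%:R + 1); set lt := ln t0; set lT := ln (T%:R : R).
have hH : 2 * A - 2 < lT.
  have hp : 0 < (t0 + 1) ^+ 2 / E ^+ 2 by apply: divr_gt0; apply: exprn_gt0; lra.
  have := hT; rewrite -(ltr_ln (R:=R)) ?posrE //.
  rewrite ln_div ?posrE ?exprn_gt0 //; last lra.
  rewrite !lnXn //; last lra.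
  rewrite /E expRK -/A => h; rewrite /lT; lra.
have hlt2 : 2 <= lt.
  rewrite /lt -[X in X <= _](expRK (R:=R)) ler_ln ?posrE ?expR_gt0 //; last lra.
  rewrite (_ : (2 : R) = 2%:R * 1); last by rewrite mulr1.
  rewrite expRM_natl -/E expr2; nra.
have hAlt : lt <= A by rewrite /lt /A ler_ln ?posrE //; lra.
have hBlT : lT <= B by rewrite /lT /B ler_ln ?posrE //; lra.
have hBlT2 : B - lT <= 1 / 21.
  have := @ln_sub_le R T%:R (T%:R + 1) T0 ltac:(lra).
  rewrite -/B -/lT (_ : T%:R + 1 - T%:R = 1); last by ring.
  move=> h; apply: le_trans h _; rewrite ler_pdivrMr // mulrC -ler_pdivrMr //; lra.
set S := \sum_(i < T) eps_prob t0 i.+1.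
have [hSlo hSup] := @sum_bounds R t0 T ltac:(lra) ltac:(lra).
set m := Num.Def.trunc t0 in hSlo hSup.
have /andP[hm1 hm2] := truncn_itv t00; rewrite -/m in hm1 hm2.
set y : R := m.+1%:R in hSlo hSup hm2.
rewrite -/B -/S -/lT in hSlo hSup.
have hy : y = m%:R + 1 by rewrite /y natr1.
have y0 : 0 < y by lra.
have hlm : ln y <= A by rewrite /A ler_ln ?posrE //; lra.
have hSlo' : t0 * (1 + B - A) - 1 <= S.
  have : t0 * ln y <= t0 * A by apply: ler_wpM2l.
  move: hSlo; rewrite mulrBr; lra.
have hSup' : S <= t0 * (1 + lT - lt) + 1 / 20.
  have h1 := @ln_sub_le R y t0 y0 ltac:(lra).
  have h2 : t0 * (lt - ln y) <= t0 * ((t0 - y) / y) by apply: ler_wpM2l.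
  have h3 : (y - t0) + t0 * ((t0 - y) / y) <= 1 / 20.
    have -> : (y - t0) + t0 * ((t0 - y) / y) = (y - t0) ^+ 2 / y by field; rewrite gt_eqF.
    rewrite ler_pdivrMr // mulrC mulrA -ler_pdivrMr; last lra.
    rewrite expr2; nra.
  move: hSup; rewrite mulrBr; rewrite mulrBr in h2; rewrite mulrBr mulrDr mulr1; move: (t0 * ((t0 - y) / y)) h2 h3 => X h2 h3; lra.
set mu := \sum_(i < T) eps_prob t0 i.+1 / n.
have hmuS : mu * n = S by rewrite /mu -mulr_suml divfK // gt_eqF //; lra.
set Lo := 1 + B - A; set U := 1 + lT - lt.
have hLo : 1 <= Lo by rewrite /Lo; lra.
have hU : 0 <= U by rewrite /U; lra.
have hmulo : 2 * C0 * Lo - 1 <= mu.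
  have : n * (2 * C0 * Lo) - 1 <= n * mu.
    move: hSlo'; rewrite ht0 -/n -/Lo -hmuS; move=> h; rewrite (mulrC n mu); nra.
  nra.
have hmuup : mu <= 2 * C0 * U + 1 / 20.
  have : n * mu <= n * (2 * C0 * U) + 1 / 20.
    move: hSup'; rewrite ht0 -/n -/U -hmuS; move=> h; rewrite (mulrC n mu); nra.
  nra.
have hq : forall i : nat, 0 <= eps_prob t0 i.+1 / n <= 1.
  move=> i; apply/andP; split; first by apply: divr_ge0; [exact: eps_prob_ge0|lra].
  rewrite ler_pdivrMr; last lra.
  have := @eps_prob_le1 R t0 i.+1; lra.
set lam1 := ln (3 / 2 : R).
have hlam1 : 64 / 159 <= lam1 by exact: ln32_ge.
have e1 : expR lam1 = 3 / 2 by rewrite /lam1 lnK // posrE; lra.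
have hup := @tail_up R K t0 T k lam1 (3 * C0 * U) ltac:(lra) t00.
rewrite e1 in hup.
have hp1 := @prod_le_exp R T (fun i => eps_prob t0 i.+1 / n) (3 / 2) ltac:(lra) hq.
have Pup : eps_decay_Pr t0 (fun w : {ffun 'I_T -> option K} => 3 * C0 * U <= (n_arm k w)%:R)
   <= expR (- B).
  apply: le_trans hup _.
  apply: le_trans (ler_wpM2l (expR_ge0 _) hp1) _.
  rewrite -expRD ler_expR -/mu.
  have hP : 10 * U <= C0 * U by apply: ler_wpM2r.
  have hCU : 0 <= C0 * U by apply: mulr_ge0 => //; lra.
  have hl : 64 / 159 * (C0 * U) <= lam1 * (C0 * U) by apply: ler_wpM2r.
  have -> : - lam1 * (3 * C0 * U) + (3 / 2 - 1) * mu = -3 * (lam1 * (C0 * U)) + mu / 2 by field.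
  have hmu' : mu <= 2 * (C0 * U) + 1 / 20 by rewrite mulrA.
  have hUd : U = 1 + lT - lt by [].
  move: (lam1 * (C0 * U)) hl => LP hl.
  move: (C0 * U) hP hl hmu' hCU => P hP hl hmu' hCU.
  lra.
set lam2 := ln (2 : R).
have hlam2 : lam2 <= 3 / 4 by exact: ln2_le.
have hlam20 : 0 <= lam2 by rewrite /lam2 ltW // ln_gt0 //; lra.
have e2 : expR (- lam2) = 1 / 2 by rewrite expRN /lam2 lnK ?posrE // div1r.
have hlow := @tail_low R K t0 T k lam2 (C0 * Lo) hlam20 t00.
rewrite e2 in hlow.
have hp2 := @prod_le_exp R T (fun i => eps_prob t0 i.+1 / n) (1 / 2) ltac:(lra) hq.
have Plow : eps_decay_Pr t0 (fun w : {ffun 'I_T -> option K} => (n_arm k w)%:R <= C0 * Lo)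
   <= expR (- B).
  apply: le_trans hlow _.
  apply: le_trans (ler_wpM2l (expR_ge0 _) hp2) _.
  rewrite -expRD ler_expR -/mu.
  have hP : 10 * Lo <= C0 * Lo by apply: ler_wpM2r; lra.
  have hCL : 0 <= C0 * Lo by apply: mulr_ge0; lra.
  have hl : lam2 * (C0 * Lo) <= 3 / 4 * (C0 * Lo) by apply: ler_wpM2r.
  have -> : lam2 * (C0 * Lo) + (1 / 2 - 1) * mu = lam2 * (C0 * Lo) - mu / 2 by field.
  have hmu' : 2 * (C0 * Lo) - 1 <= mu by rewrite mulrA.
  have hLd : Lo = 1 + B - A by [].
  move: (lam2 * (C0 * Lo)) hl => LP hl.
  move: (C0 * Lo) hP hl hmu' hCL => P hP hl hmu' hCL.
  lra.
have eB : expR (- B) = 1 / (T%:R + 1) by rewrite expRN /B lnK ?posrE ?div1r //; lra.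
rewrite eB in Pup Plow.
have := @combine_tails R K t0 T k (3 * C0 * U) (C0 * Lo) (1 / (T%:R + 1)) t00
  (@total_prob R K t0 T k) Plow Pup.
by rewrite mulrA mulr1.
Qed.
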